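(* Let $f:\mathbb{R}\to(0,\infty)$ be $C^4$, unimodal with maximum at $\mu$, of the form $f=e^{-H}$ with $H$ regularly varying (there is $\alpha>0$ with $H(tx)/H(t)\to x^\alpha$ as $|t|\to\infty$ for all $x>0$), and with $|(\log f)''''|<M$ for some $M>0$. Then for $\beta>0$, $$M'(\beta)=\mathrm{Var}_\beta(h(X)),\qquad S(\beta)=-\frac1\beta,\qquad S'(\beta)=\frac1{\beta^2}.$$
   Context: $h=\log f$, $k(x)=(x-\mu)h'(x)$; $\mathbb{E}_\beta,\mathrm{Var}_\beta$ denote moments under the density $f^\beta(x)/Z_\beta$ with $Z_\beta=\int f^\beta(z)\,dz$; $M(\beta)=\mathbb{E}_\beta[h(X)]$ and $S(\beta)=\mathbb{E}_\beta[k(X)]$. *)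

(* Defs.v *)
From Stdlib Require Import Reals.
From Coquelicot Require Import Coquelicot.
Open Scope R_scope.

Definition Int_R (g : R -> R) : R :=
  RInt_gen g (Rbar_locally m_infty) (Rbar_locally p_infty).
Definition ex_Int_R (g : R -> R) : Prop :=
  ex_RInt_gen g (Rbar_locally m_infty) (Rbar_locally p_infty).

Definition hlog (f : R -> R) (x : R) : R := ln (f x).
Definition Hpot (f : R -> R) (x : R) : R := - ln (f x).
Definition kfun (f : R -> R) (mu : R) (x : R) : R := (x - mu) * Derive (hlog f) x.

Definition fpow (f : R -> R) (beta : R) (x : R) : R := Rpower (f x) beta.
Definition Zb (f : R -> R) (beta : R) : R := Int_R (fpow f beta).

Definition Eb (f : R -> R) (beta : R) (g : R -> R) : R :=
  Int_R (fun x => g x * fpow f beta x) / Zb f beta.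
Definition Varb (f : R -> R) (beta : R) (g : R -> R) : R :=
  Eb f beta (fun x => (g x - Eb f beta g) ^ 2).

Definition Mfun (f : R -> R) (beta : R) : R := Eb f beta (hlog f).
Definition Sfun (f : R -> R) (mu : R) (beta : R) : R := Eb f beta (kfun f mu).

Definition C4 (f : R -> R) : Prop :=
  (forall n x, (n <= 4)%nat -> ex_derive_n f n x) /\
  (forall x, continuous (Derive_n f 4) x).

Definition unimodal_at (f : R -> R) (mu : R) : Prop :=
  (forall x y, x <= y <= mu -> f x <= f y) /\
  (forall x y, mu <= x <= y -> f y <= f x).

Definition regularly_varying (H : R -> R) (alpha : R) : Prop :=
  forall x, 0 < x ->
    is_lim (fun t => H (t * x) / H t) p_infty (Rpower x alpha) /\
    is_lim (fun t => H (t * x) / H t) m_infty (Rpower x alpha).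

(* Main.v *)
Require Import Defs.
From Stdlib Require Import Reals Lra Lia Classical FunctionalExtensionality.
From Coquelicot Require Import Coquelicot.
Open Scope R_scope.

Lemma exp_le' x y : x <= y -> exp x <= exp y.
Proof. intros [H|H]; [left; apply exp_increasing; auto | subst; lra]. Qed.

Lemma ln_le' x y : 0 < x -> x <= y -> ln x <= ln y.
Proof. intros Hx [H|H]; [left; apply ln_increasing; auto | subst; lra]. Qed.

Lemma growth (G : R -> R) (m0 c T0 : R) :
  1 < c -> (forall x y, m0 <= x <= y -> G x <= G y) ->
  (forall t, T0 < t -> c < G (t * 2) / G t) ->
  forall eps, 0 < eps -> exists B T, 0 < T /\ forall x, T <= x -> x ^ 2 * exp (- (eps * G x)) <= B.
Proof.
  intros Hc Hmon Hrat eps Heps.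
  set (T1 := Rmax (T0 + 1) (Rmax m0 1)).
  assert (HT1a : T0 < T1) by (unfold T1; pose proof (Rmax_l (T0+1) (Rmax m0 1)); lra).
  assert (HT1b : m0 <= T1) by (unfold T1; pose proof (Rmax_r (T0+1) (Rmax m0 1)); pose proof (Rmax_l m0 1); lra).
  assert (HT1c : 1 <= T1) by (unfold T1; pose proof (Rmax_r (T0+1) (Rmax m0 1)); pose proof (Rmax_r m0 1); lra).
  assert (A : forall t, T1 <= t -> 0 < G t /\ c * G t < G (t * 2)).
  { intros t Ht. specialize (Hrat t ltac:(lra)).
    assert (Hm : G t <= G (t * 2)) by (apply Hmon; lra).
    destruct (Rtotal_order (G t) 0) as [Hn|[Hz|Hp]].
    - exfalso. set (r := G (t*2) / G t) in *.
      assert (E : G (t*2) = r * G t) by (unfold r; field; lra). nra.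
    - exfalso. rewrite Hz in Hrat. unfold Rdiv in Hrat. rewrite Rinv_0 in Hrat. lra.
    - split; auto. set (r := G (t*2) / G t) in *.
      assert (E : G (t*2) = r * G t) by (unfold r; field; lra). nra. }
  assert (B0 : forall n, T1 <= T1 * 2 ^ n /\ c ^ n * G T1 <= G (T1 * 2 ^ n)).
  { induction n as [|n IH].
    - simpl. rewrite !Rmult_1_r, Rmult_1_l. split; lra.
    - destruct IH as [IH1 IH2]. simpl.
      replace (T1 * (2 * 2 ^ n)) with ((T1 * 2 ^ n) * 2) by ring.
      destruct (A _ IH1) as [A1 A2]. split; [lra|].
      assert (c * (c ^ n * G T1) <= c * G (T1 * 2 ^ n)) by (apply Rmult_le_compat_l; lra). lra. }
  destruct (A T1 ltac:(lra)) as [GT1 _].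
  set (K := ln 4 / (eps * (c - 1))).
  assert (Hln4 : 0 < ln 4) by (rewrite <- ln_1; apply ln_increasing; lra).
  destruct (Pow_x_infinity c ltac:(rewrite Rabs_pos_eq; lra) (K / G T1)) as [N HN].
  specialize (HN N (le_n N)). rewrite Rabs_pos_eq in HN by (left; apply pow_lt; lra).
  set (T2 := T1 * 2 ^ N).
  destruct (B0 N) as [HT2a HT2b]. fold T2 in HT2a, HT2b.
  assert (HK : K <= G T2).
  { apply Rle_trans with (c ^ N * G T1); auto.
    apply Rge_le in HN. apply (Rmult_le_compat_r (G T1)) in HN; [|lra].
    unfold Rdiv in HN. rewrite Rmult_assoc, Rinv_l, Rmult_1_r in HN; lra. }
  assert (GK : forall t, T2 <= t -> K <= G t /\ G T2 <= G t).
  { intros t Ht. assert (G T2 <= G t) by (apply Hmon; lra). lra. }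
  set (phi := fun t => t ^ 2 * exp (- (eps * G t))).
  assert (C : forall t, T2 <= t -> phi (t * 2) <= phi t).
  { intros t Ht. unfold phi. destruct (GK t Ht) as [K1 K2].
    destruct (A t ltac:(lra)) as [A1 A2].
    assert (E1 : eps * G t + ln 4 <= eps * G (t * 2)).
    { assert (eps * (c - 1) * K = ln 4) by (unfold K; field; lra).
      assert (0 < eps * (c-1)) by (apply Rmult_lt_0_compat; lra).
      assert (eps * (c - 1) * K <= eps * (c-1) * G t) by (apply Rmult_le_compat_l; lra).
      nra. }
    assert (E2 : exp (- (eps * G (t * 2))) <= exp (- (eps * G t)) / 4).
    { replace (exp (- (eps * G t)) / 4) with (exp (- (eps * G t) - ln 4)).
      - apply exp_le'; lra.
      - unfold Rminus. rewrite exp_plus, (exp_Ropp (ln 4)), exp_ln by lra. field. }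
    assert (0 <= t ^ 2) by (apply pow_le; lra).
    replace ((t * 2) ^ 2) with (4 * t ^ 2) by ring.
    apply Rmult_le_compat_l with (r := 4 * t ^ 2) in E2; [|lra].
    lra. }
  set (B := 4 * T2 ^ 2 * exp (- (eps * G T2))).
  assert (D : forall t, T2 <= t <= T2 * 2 -> phi t <= B).
  { intros t Ht. unfold phi, B. destruct (GK t ltac:(lra)) as [_ K2].
    assert (t ^ 2 <= 4 * T2 ^ 2) by nra.
    assert (exp (- (eps * G t)) <= exp (- (eps * G T2))).
    { apply exp_le'. apply Ropp_le_contravar. apply Rmult_le_compat_l; lra. }
    pose proof (exp_pos (- (eps * G t))). nra. }
  assert (E : forall n t, T2 <= t <= T2 * 2 * 2 ^ n -> phi t <= B).
  { induction n as [|n IH]; intros t Ht.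
    - simpl in Ht. apply D. lra.
    - destruct (Rle_lt_dec t (T2 * 2)) as [Hl|Hl].
      + apply D. lra.
      + replace t with ((t / 2) * 2) by field.
        apply Rle_trans with (phi (t / 2)).
        * apply C. lra.
        * apply IH. simpl in Ht. split; lra. }
  exists B, T2. split; [lra|]. intros x Hx.
  assert (HT2p : 0 < T2 * 2) by lra.
  destruct (Pow_x_infinity 2 ltac:(rewrite Rabs_pos_eq; lra) (x / (T2 * 2))) as [M HM].
  specialize (HM M (le_n M)). rewrite Rabs_pos_eq in HM by (left; apply pow_lt; lra).
  apply (E M). split; auto.
  apply Rge_le in HM. apply (Rmult_le_compat_l (T2 * 2)) in HM; [|lra].
  replace (T2 * 2 * (x / (T2 * 2))) with x in HM by (field; lra). lra.
Qed.

Lemma lim_event_p (g : R -> R) (L c : R) : c < L -> is_lim g p_infty L ->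
  exists M, forall t, M < t -> c < g t.
Proof.
  intros H Hl. apply is_lim_spec in Hl.
  assert (Hp : 0 < L - c) by lra.
  destruct (Hl (mkposreal _ Hp)) as [M HM]. exists M. intros t Ht.
  specialize (HM t Ht). simpl in HM. apply Rabs_def2 in HM. lra.
Qed.

Lemma lim_event_m (g : R -> R) (L c : R) : c < L -> is_lim g m_infty L ->
  exists M, forall t, t < M -> c < g t.
Proof.
  intros H Hl. apply is_lim_spec in Hl.
  assert (Hp : 0 < L - c) by lra.
  destruct (Hl (mkposreal _ Hp)) as [M HM]. exists M. intros t Ht.
  specialize (HM t Ht). simpl in HM. apply Rabs_def2 in HM. lra.
Qed.

Lemma fmax (f : R -> R) mu : unimodal_at f mu -> forall x, f x <= f mu.
Proof.
  intros [H1 H2] x. destruct (Rle_lt_dec x mu).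
  - apply H1; lra.
  - apply H2; lra.
Qed.

Lemma exp_fpow f eps x : exp (- (eps * Hpot f x)) = fpow f eps x.
Proof. unfold fpow, Rpower, Hpot. f_equal. ring. Qed.

Lemma tail_bound (f : R -> R) (mu alpha : R) :
  (forall x, 0 < f x) -> unimodal_at f mu ->
  0 < alpha -> regularly_varying (Hpot f) alpha ->
  forall eps, 0 < eps -> exists C, forall x, fpow f eps x <= C / (1 + x ^ 2).
Proof.
  intros fpos Hu Ha Hrv eps Heps.
  destruct (Hrv 2 ltac:(lra)) as [Lp Lm].
  assert (H2a : 1 < Rpower 2 alpha).
  { rewrite <- (Rpower_O 2) at 1 by lra. apply Rpower_lt; lra. }
  set (c := (1 + Rpower 2 alpha) / 2).
  assert (Hc : 1 < c) by (unfold c; lra).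
  destruct (lim_event_p _ (Rpower 2 alpha) c ltac:(unfold c; lra) Lp) as [Mp HMp].
  destruct (lim_event_m _ (Rpower 2 alpha) c ltac:(unfold c; lra) Lm) as [Mm HMm].
  destruct Hu as [Hu1 Hu2].
  destruct (growth (Hpot f) mu c Mp Hc) with (eps := eps) as [B1 [T1 [HT1 HB1]]]; auto.
  { intros x y Hxy. unfold Hpot. apply Ropp_le_contravar. apply ln_le'; auto; apply Hu2; lra. }
  destruct (growth (fun t => Hpot f (- t)) (- mu) c (- Mm) Hc) with (eps := eps) as [B2 [T2 [HT2 HB2]]]; auto.
  { intros x y Hxy. unfold Hpot. apply Ropp_le_contravar. apply ln_le'; auto; apply Hu1; lra. }
  { intros t Ht. replace (- (t * 2)) with ((- t) * 2) by ring. apply HMm. lra. }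
  set (F0 := f mu).
  assert (HF : forall x, fpow f eps x <= Rpower F0 eps).
  { intros x. unfold fpow. apply Rle_Rpower_l; [lra|]. split; auto. apply fmax; split; auto. }
  set (T := Rmax 1 (Rmax T1 T2)).
  assert (HTa : 1 <= T) by apply Rmax_l.
  assert (HTb : T1 <= T) by (unfold T; pose proof (Rmax_r 1 (Rmax T1 T2)); pose proof (Rmax_l T1 T2); lra).
  assert (HTc : T2 <= T) by (unfold T; pose proof (Rmax_r 1 (Rmax T1 T2)); pose proof (Rmax_r T1 T2); lra).
  exists (2 * Rabs B1 + 2 * Rabs B2 + (1 + T ^ 2) * Rpower F0 eps).
  intros x.
  assert (Hp : 0 < 1 + x ^ 2) by (pose proof (pow2_ge_0 x); lra).
  apply Rmult_le_reg_r with (1 + x ^ 2); auto.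
  unfold Rdiv. rewrite Rmult_assoc, Rinv_l, Rmult_1_r by lra.
  assert (HF0 : 0 < Rpower F0 eps) by (unfold Rpower; apply exp_pos).
  assert (Hfp : 0 < fpow f eps x) by (unfold fpow, Rpower; apply exp_pos).
  pose proof (Rle_abs B1). pose proof (Rle_abs B2).
  pose proof (Rabs_pos B1). pose proof (Rabs_pos B2).
  destruct (Rle_lt_dec T x) as [Hx|Hx].
  - specialize (HB1 x ltac:(lra)). rewrite exp_fpow in HB1.
    assert (1 <= x ^ 2) by nra.
    assert (fpow f eps x * (1 + x ^ 2) <= 2 * (x ^ 2 * fpow f eps x)) by nra.
    assert (0 <= (1 + T ^ 2) * Rpower F0 eps) by (apply Rmult_le_pos; nra).
    lra.
  - destruct (Rle_lt_dec x (- T)) as [Hx'|Hx'].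
    + specialize (HB2 (- x) ltac:(lra)). rewrite Ropp_involutive, exp_fpow in HB2.
      replace ((- x) ^ 2) with (x ^ 2) in HB2 by ring.
      assert (1 <= x ^ 2) by nra.
      assert (fpow f eps x * (1 + x ^ 2) <= 2 * (x ^ 2 * fpow f eps x)) by nra.
      assert (0 <= (1 + T ^ 2) * Rpower F0 eps) by (apply Rmult_le_pos; nra).
      lra.
    + assert (x ^ 2 <= T ^ 2) by nra.
      specialize (HF x).
      assert (fpow f eps x * (1 + x ^ 2) <= (1 + T ^ 2) * Rpower F0 eps) by nra.
      lra.
Qed.

Definition wf (x : R) : R := / (1 + x ^ 2).

Lemma wf_pos x : 0 < 1 + x ^ 2.
Proof. pose proof (pow2_ge_0 x). lra. Qed.

Lemma exd_cont (g : R -> R) x : ex_derive g x -> continuous g x.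
Proof. intros H. apply (ex_derive_continuous g x H). Qed.

Lemma cmult (g1 g2 : R -> R) x : continuous g1 x -> continuous g2 x ->
  continuous (fun y => g1 y * g2 y) x.
Proof. intros H1 H2. exact (continuous_mult (K:=R_AbsRing) g1 g2 x H1 H2). Qed.
Lemma cplus (g1 g2 : R -> R) x : continuous g1 x -> continuous g2 x ->
  continuous (fun y => g1 y + g2 y) x.
Proof. intros H1 H2. exact (continuous_plus (V:=R_NormedModule) g1 g2 x H1 H2). Qed.
Lemma cminus (g1 g2 : R -> R) x : continuous g1 x -> continuous g2 x ->
  continuous (fun y => g1 y - g2 y) x.
Proof. intros H1 H2. exact (continuous_minus (V:=R_NormedModule) g1 g2 x H1 H2). Qed.
Lemma cconst (c : R) x : continuous (fun _ : R => c) x.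
Proof. exact (continuous_const (U:=R_UniformSpace) (V:=R_UniformSpace) c x). Qed.
Lemma cid x : continuous (fun y : R => y) x.
Proof. apply exd_cont. auto_derive. auto. Qed.
Lemma ccomp (g1 g2 : R -> R) x : continuous g1 x -> continuous g2 (g1 x) ->
  continuous (fun y => g2 (g1 y)) x.
Proof. intros H1 H2. exact (continuous_comp (U:=R_UniformSpace) (V:=R_UniformSpace) (W:=R_UniformSpace) g1 g2 x H1 H2). Qed.

Lemma wf_cont x : continuous wf x.
Proof.
  apply exd_cont. unfold wf. auto_derive. pose proof (wf_pos x). lra.
Qed.

Lemma atan_RInt a b : is_RInt wf a b (atan b - atan a).
Proof.
  apply (is_RInt_derive atan wf).
  - intros x _. apply is_derive_Reals. apply derivable_pt_lim_atan.
  - intros x _. apply wf_cont.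
Qed.

Lemma ex_RInt_cont (g : R -> R) a b : (forall x, continuous g x) -> ex_RInt g a b.
Proof. intros H. apply (ex_RInt_continuous (V:=R_CompleteNormedModule)). intros; apply H. Qed.

Lemma rint_correct (g : R -> R) a b : ex_RInt g a b -> is_RInt g a b (RInt g a b).
Proof. intros H. exact (RInt_correct (V:=R_CompleteNormedModule) g a b H). Qed.

Lemma nonneg_int (g : R -> R) (D : R) :
  (forall x, continuous g x) -> (forall x, 0 <= g x <= D * wf x) ->
  exists l, is_RInt_gen g (Rbar_locally m_infty) (Rbar_locally p_infty) l /\
    l <= D * PI /\ (forall a b, a <= b -> RInt g a b <= l).
Proof.
  intros Hc Hb.
  assert (HD : 0 <= D).
  { destruct (Hb 0) as [H1 H2]. unfold wf in H2.
    replace (/ (1 + 0 ^ 2)) with 1 in H2 by (simpl; field). lra. }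
  assert (Hw : forall x, continuous (fun x => D * wf x) x).
  { intros x. apply cmult; [apply cconst | apply wf_cont]. }
  assert (Bd : forall a b, a <= b -> RInt g a b <= D * PI).
  { intros a b Hab.
    apply Rle_trans with (RInt (fun x => D * wf x) a b).
    - apply RInt_le; auto; try apply ex_RInt_cont; auto. intros; apply Hb.
    - rewrite (is_RInt_unique (fun x => D * wf x) a b (D * (atan b - atan a))).
      2: { exact (is_RInt_scal _ _ _ D _ (atan_RInt a b)). }
      pose proof (atan_bound a). pose proof (atan_bound b).
      apply Rmult_le_compat_l; auto. lra. }
  set (E := fun y => exists a b, a <= b /\ y = RInt g a b).
  assert (HE1 : bound E) by (exists (D * PI); intros y [a [b [Hab ->]]]; auto).
  assert (HE2 : exists y, E y) by (exists (RInt g 0 0); exists 0, 0; split; [lra|auto]).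
  destruct (completeness E HE1 HE2) as [l [Hub Hlub]].
  assert (Hup : forall a b, a <= b -> RInt g a b <= l).
  { intros a b Hab. apply Hub. exists a, b; auto. }
  exists l. split; [|split; auto].
  2: { apply Hlub. intros y [a [b [Hab ->]]]. auto. }
  intros P [eps HP]. unfold filtermapi.
  assert (Hex : exists a0 b0, a0 <= b0 /\ l - eps < RInt g a0 b0).
  { apply NNPP. intros Hn. assert (l <= l - eps).
    { apply Hlub. intros y [a [b [Hab ->]]].
      apply Rnot_lt_le. intros Hlt. apply Hn. exists a, b; auto. }
    pose proof (cond_pos eps). lra. }
  destruct Hex as [a0 [b0 [Hab0 Hl0]]].
  apply (Filter_prod _ _ _ (fun a => a < a0) (fun b => b0 < b)).
  - exists a0. auto.
  - exists b0. auto.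
  - intros a b Ha Hb'. exists (RInt g a b). split.
    + apply rint_correct, ex_RInt_cont; auto.
    + apply HP. simpl.
      assert (Hge : RInt g a0 b0 <= RInt g a b).
      { rewrite <- (RInt_Chasles g a a0 b) by (apply ex_RInt_cont; auto).
        rewrite <- (RInt_Chasles g a0 b0 b) by (apply ex_RInt_cont; auto).
        change (plus ?x ?y) with (x + y).
        assert (0 <= RInt g a a0) by (apply RInt_ge_0; [lra| apply ex_RInt_cont; auto | intros; apply Hb]).
        assert (0 <= RInt g b0 b) by (apply RInt_ge_0; [lra| apply ex_RInt_cont; auto | intros; apply Hb]).
        change (plus ?x ?y) with (x + y). lra. }
      assert (RInt g a b <= l) by (apply Hup; lra).
      change (Rabs (RInt g a b - l) < eps). apply Rabs_def1; lra.
Qed.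

Lemma dom_int (g : R -> R) (D : R) :
  (forall x, continuous g x) -> (forall x, Rabs (g x) <= D * wf x) ->
  ex_Int_R g /\ Rabs (Int_R g) <= D * PI.
Proof.
  intros Hc Hb.
  assert (Hw : forall x, continuous (fun x => D * wf x) x).
  { intros x. apply cmult; [apply cconst | apply wf_cont]. }
  destruct (nonneg_int (fun x => g x + D * wf x) (2 * D)) as [l1 [H1 _]].
  { intros x. apply cplus; auto. }
  { intros x. specialize (Hb x). apply Rabs_le_between in Hb. lra. }
  destruct (nonneg_int (fun x => D * wf x) D) as [l2 [H2 [H2b _]]]; auto.
  { intros x. specialize (Hb x). pose proof (Rabs_pos (g x)). lra. }
  assert (Hg : is_RInt_gen g (Rbar_locally m_infty) (Rbar_locally p_infty) (l1 - l2)).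
  { pose proof (is_RInt_gen_minus _ _ _ _ H1 H2) as H3.
    replace g with (fun y => minus (g y + D * wf y) (D * wf y)).
    - exact H3.
    - apply functional_extensionality. intros x. change (g x + D * wf x - D * wf x = g x). ring. }
  assert (Hex : ex_Int_R g) by (exists (l1 - l2); auto).
  split; auto.
  apply Rle_trans with l2; auto.
  apply (RInt_gen_norm g (fun x => D * wf x) (Int_R g) l2). all: try exact H2.
  - apply (Filter_prod _ _ _ (fun a => a < 0) (fun b => 0 < b)).
    + hnf; exists 0; auto.
    + hnf; exists 0; auto.
    + simpl. intros; lra.
  - apply (Filter_prod _ _ _ (fun a => True) (fun b => True)).
    + hnf; exists 0; auto.
    + hnf; exists 0; auto.
    + intros. apply Hb.
  - apply RInt_gen_correct; auto.
Qed.

Lemma taylor1 s : Rabs (exp s - 1) <= Rabs s * exp (Rabs s).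
Proof.
  destruct (Rtotal_order s 0) as [Hs|[Hs|Hs]].
  - destruct (MVT_cor2 exp exp s 0 Hs) as [c [E Hc]].
    { intros; apply derivable_pt_lim_exp. }
    rewrite exp_0 in E.
    rewrite Rabs_left1 by (pose proof (exp_increasing _ _ Hs); rewrite exp_0 in *; lra).
    rewrite (Rabs_left s Hs).
    assert (exp c <= 1) by (rewrite <- exp_0; left; apply exp_increasing; lra).
    assert (1 <= exp (- s)) by (rewrite <- exp_0; left; apply exp_increasing; lra).
    nra.
  - subst. rewrite exp_0, Rabs_R0. replace (1 - 1) with 0 by ring. rewrite Rabs_R0. lra.
  - destruct (MVT_cor2 exp exp 0 s Hs) as [c [E Hc]].
    { intros; apply derivable_pt_lim_exp. }
    rewrite exp_0 in E.
    rewrite Rabs_pos_eq by (pose proof (exp_increasing _ _ Hs); rewrite exp_0 in *; lra).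
    rewrite (Rabs_pos_eq s) by lra.
    assert (exp c <= exp s) by (left; apply exp_increasing; lra).
    nra.
Qed.

Lemma taylor2 y : Rabs (exp y - 1 - y) <= y ^ 2 * exp (Rabs y).
Proof.
  set (g := fun y => exp y - 1 - y).
  assert (Hd : forall c, derivable_pt_lim g c (exp c - 1)).
  { intros c. apply is_derive_Reals. unfold g. auto_derive; auto. ring. }
  change (exp y - 1 - y) with (g y).
  assert (g0 : g 0 = 0) by (unfold g; rewrite exp_0; ring).
  destruct (Rtotal_order y 0) as [Hs|[Hs|Hs]].
  - destruct (MVT_cor2 g (fun c => exp c - 1) y 0 Hs) as [c [E Hc]].
    { intros; apply Hd. }
    assert (Hg : g y = - ((exp c - 1) * (0 - y))) by lra.
    rewrite Hg, Rabs_Ropp, Rabs_mult.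
    pose proof (taylor1 c).
    assert (Rabs c <= Rabs y) by (rewrite !Rabs_left; lra).
    assert (exp (Rabs c) <= exp (Rabs y)) by (apply exp_le'; lra).
    rewrite (Rabs_pos_eq (0 - y)) by lra.
    assert (Rabs (exp c - 1) <= Rabs y * exp (Rabs y)).
    { apply Rle_trans with (Rabs c * exp (Rabs c)); auto.
      apply Rmult_le_compat; auto using Rabs_pos; left; apply exp_pos. }
    replace (y ^ 2) with (Rabs y * (0 - y)) by (rewrite Rabs_left; lra || ring).
    pose proof (Rabs_pos (exp c - 1)). nra.
  - subst. rewrite g0, Rabs_R0. pose proof (exp_pos (Rabs 0)). simpl. nra.
  - destruct (MVT_cor2 g (fun c => exp c - 1) 0 y Hs) as [c [E Hc]].
    { intros; apply Hd. }
    assert (Hg : g y = (exp c - 1) * (y - 0)) by lra.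
    rewrite Hg, Rabs_mult.
    pose proof (taylor1 c).
    assert (Rabs c <= Rabs y) by (rewrite !Rabs_pos_eq; lra).
    assert (exp (Rabs c) <= exp (Rabs y)) by (apply exp_le'; lra).
    rewrite (Rabs_pos_eq (y - 0)) by lra.
    assert (Rabs (exp c - 1) <= Rabs y * exp (Rabs y)).
    { apply Rle_trans with (Rabs c * exp (Rabs c)); auto.
      apply Rmult_le_compat; auto using Rabs_pos; left; apply exp_pos. }
    replace (y ^ 2) with (Rabs y * (y - 0)) by (rewrite Rabs_pos_eq; lra || ring).
    pose proof (Rabs_pos (exp c - 1)). nra.
Qed.

Lemma polyexp e h0 : 0 < e -> exists B, forall y, y <= h0 -> (1 + Rabs y) ^ 3 * exp (e * y) <= B.
Proof.
  intros He.
  set (m := Rmin 1 (e / 3)).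
  assert (Hm : 0 < m) by (unfold m; apply Rmin_glb_lt; lra).
  assert (Hm1 : m <= 1) by apply Rmin_l.
  assert (Hm2 : m <= e / 3) by apply Rmin_r.
  exists ((1 + Rabs h0) ^ 3 * exp (e * Rabs h0) + / m ^ 3).
  intros y Hy.
  assert (Hinv : 0 < / m ^ 3) by (apply Rinv_0_lt_compat, pow_lt; lra).
  destruct (Rle_lt_dec 0 y) as [Hp|Hn].
  - assert (1 + Rabs y <= 1 + Rabs h0) by (rewrite (Rabs_pos_eq y) by lra; pose proof (Rle_abs h0); lra).
    assert ((1 + Rabs y) ^ 3 <= (1 + Rabs h0) ^ 3) by (apply pow_incr; pose proof (Rabs_pos y); lra).
    assert (exp (e * y) <= exp (e * Rabs h0)).
    { apply exp_le'. apply Rmult_le_compat_l; [lra|]. pose proof (Rle_abs h0); lra. }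
    assert (0 <= (1 + Rabs y) ^ 3) by (apply pow_le; pose proof (Rabs_pos y); lra).
    assert ((1 + Rabs y) ^ 3 * exp (e * y) <= (1 + Rabs h0) ^ 3 * exp (e * Rabs h0)).
    { apply Rmult_le_compat; auto. left; apply exp_pos. }
    lra.
  - rewrite Rabs_left by lra. set (z := - y).
    assert (Hz : 0 < z) by (unfold z; lra).
    replace (e * y) with (- (e * z)) by (unfold z; ring).
    assert (E3 : exp (e * z) = exp (e * z / 3) ^ 3).
    { replace (e * z) with (e * z / 3 + (e * z / 3 + e * z / 3)) at 1 by field.
      rewrite !exp_plus. ring. }
    assert (L1 : m * (1 + z) <= exp (e * z / 3)).
    { pose proof (exp_ineq1_le (e * z / 3)). assert (m * z <= e * z / 3) by nra. nra. }
    assert (L2 : (m * (1 + z)) ^ 3 <= exp (e * z)).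
    { rewrite E3. apply pow_incr. split; [nra | auto]. }
    assert (L3 : (1 + z) ^ 3 <= exp (e * z) / m ^ 3).
    { apply Rmult_le_reg_r with (m ^ 3); [apply pow_lt; lra|].
      unfold Rdiv. rewrite Rmult_assoc, Rinv_l, Rmult_1_r by (apply pow_nonzero; lra).
      rewrite <- Rpow_mult_distr. lra. }
    rewrite exp_Ropp.
    assert (0 < exp (e * z)) by apply exp_pos.
    assert ((1 + z) ^ 3 * / exp (e * z) <= / m ^ 3).
    { apply Rmult_le_reg_r with (exp (e * z)); auto.
      rewrite Rmult_assoc, Rinv_l, Rmult_1_r by lra.
      unfold Rdiv in L3. lra. }
    assert (0 <= (1 + Rabs h0) ^ 3 * exp (e * Rabs h0)).
    { apply Rmult_le_pos; [apply pow_le; pose proof (Rabs_pos h0); lra | left; apply exp_pos]. }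
    lra.
Qed.

Lemma fpow_exp f b x : fpow f b x = exp (b * hlog f x).
Proof. reflexivity. Qed.

Lemma fpow_pos f b x : 0 < fpow f b x.
Proof. apply exp_pos. Qed.

Lemma fpow_add f a b x : fpow f (a + b) x = fpow f a x * fpow f b x.
Proof. rewrite !fpow_exp, <- exp_plus. f_equal. ring. Qed.

Lemma dom3_from f mu : (forall x, 0 < f x) -> (forall x, f x <= f mu) ->
  (forall eps, 0 < eps -> exists C, forall x, fpow f eps x <= C / (1 + x ^ 2)) ->
  forall b, 0 < b -> exists D, forall x, (1 + Rabs (hlog f x)) ^ 3 * fpow f b x <= D * wf x.
Proof.
  intros fpos fm tail b Hb.
  destruct (tail (b / 2) ltac:(lra)) as [C HC].
  destruct (polyexp (b / 2) (ln (f mu)) ltac:(lra)) as [B HB].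
  exists (B * C). intros x.
  assert (Hh : hlog f x <= ln (f mu)) by (apply ln_le'; auto).
  specialize (HB _ Hh). specialize (HC x).
  rewrite <- fpow_exp in HB.
  replace b with (b / 2 + b / 2) at 1 by field.
  rewrite fpow_add.
  assert (0 < fpow f (b/2) x) by apply fpow_pos.
  assert (0 <= (1 + Rabs (hlog f x)) ^ 3) by (apply pow_le; pose proof (Rabs_pos (hlog f x)); lra).
  assert (0 <= B) by (pose proof (Rmult_le_pos _ _ H0 (Rlt_le _ _ H)); lra).
  unfold wf. replace (B * C * / (1 + x ^ 2)) with (B * (C / (1 + x ^ 2))) by (unfold Rdiv; ring).
  rewrite <- Rmult_assoc.
  apply Rmult_le_compat; auto.
  apply Rmult_le_pos; lra. lra.
Qed.

Record Good (f : R -> R) (mu : R) : Prop := {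
  g_pos : forall x, 0 < f x;
  g_d : forall x, ex_derive f x;
  g_d2 : forall x, ex_derive (Derive f) x;
  g_max : forall x, f x <= f mu;
  g_dom : forall b, 0 < b -> exists D, forall x, (1 + Rabs (hlog f x)) ^ 3 * fpow f b x <= D * wf x
}.

Definition hd (f : R -> R) (x : R) := Derive f x / f x.


Lemma hlog_deriv f mu (G : Good f mu) x : is_derive (hlog f) x (hd f x).
Proof.
  unfold hlog, hd. pose proof (g_pos f mu G x). pose proof (g_d f mu G x).
  auto_derive; auto. rewrite Rmult_1_l. reflexivity.
Qed.

Lemma Derive_hlog f mu (G : Good f mu) x : Derive (hlog f) x = hd f x.
Proof. apply is_derive_unique. apply (hlog_deriv f mu G). Qed.

Lemma fpow_deriv f mu (G : Good f mu) b x : is_derive (fpow f b) x (b * hd f x * fpow f b x).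
Proof.
  unfold fpow, Rpower, hd. pose proof (g_pos f mu G x). pose proof (g_d f mu G x).
  auto_derive; auto. rewrite Rmult_1_l. reflexivity.
Qed.

Lemma f_cont f mu (G : Good f mu) x : continuous f x.
Proof. apply exd_cont, (g_d f mu G). Qed.
Lemma Df_cont f mu (G : Good f mu) x : continuous (Derive f) x.
Proof. apply exd_cont, (g_d2 f mu G). Qed.
Lemma hlog_cont f mu (G : Good f mu) x : continuous (hlog f) x.
Proof. apply exd_cont. eexists. apply (hlog_deriv f mu G). Qed.
Lemma fpow_cont f mu (G : Good f mu) b x : continuous (fpow f b) x.
Proof. apply exd_cont. eexists. apply (fpow_deriv f mu G). Qed.
Lemma hd_cont f mu (G : Good f mu) x : continuous (hd f) x.
Proof.
  unfold hd. apply (cmult (Derive f) (fun y => / f y)).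
  - apply (Df_cont f mu G).
  - apply exd_cont. pose proof (g_pos f mu G x). pose proof (g_d f mu G x).
    auto_derive. split; auto. lra.
Qed.


Lemma Int_correct g : ex_Int_R g -> is_RInt_gen g (Rbar_locally m_infty) (Rbar_locally p_infty) (Int_R g).
Proof. intros H. exact (RInt_gen_correct (V:=R_CompleteNormedModule) g H). Qed.

Lemma Int_unique g l : is_RInt_gen g (Rbar_locally m_infty) (Rbar_locally p_infty) l -> Int_R g = l.
Proof. intros H. exact (is_RInt_gen_unique (V:=R_CompleteNormedModule) g l H). Qed.

Lemma Int_plus g1 g2 : ex_Int_R g1 -> ex_Int_R g2 ->
  ex_Int_R (fun x => g1 x + g2 x) /\ Int_R (fun x => g1 x + g2 x) = Int_R g1 + Int_R g2.
Proof.
  intros H1 H2. pose proof (is_RInt_gen_plus _ _ _ _ (Int_correct _ H1) (Int_correct _ H2)) as H.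
  split. - eexists. exact H. - apply Int_unique. exact H.
Qed.

Lemma Int_scal c g : ex_Int_R g ->
  ex_Int_R (fun x => c * g x) /\ Int_R (fun x => c * g x) = c * Int_R g.
Proof.
  intros H1. pose proof (is_RInt_gen_scal _ c _ (Int_correct _ H1)) as H.
  split. - eexists. exact H. - apply Int_unique. exact H.
Qed.

Lemma dom_b f mu (G : Good f mu) b : 0 < b -> exists D, 0 <= D /\
  forall g K, 0 <= K -> (forall x, continuous g x) ->
    (forall x, Rabs (g x) <= K * ((1 + Rabs (hlog f x)) ^ 3 * fpow f b x)) ->
    ex_Int_R g /\ Rabs (Int_R g) <= K * D * PI.
Proof.
  intros Hb. destruct (g_dom f mu G b Hb) as [D HD].
  assert (D0 : 0 <= D).
  { specialize (HD 0). assert (0 < wf 0) by (apply Rinv_0_lt_compat, wf_pos).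
    assert (0 <= (1 + Rabs (hlog f 0)) ^ 3 * fpow f b 0).
    { apply Rmult_le_pos; [apply pow_le; pose proof (Rabs_pos (hlog f 0)); lra | left; apply fpow_pos]. }
    nra. }
  exists D. split; auto. intros g K HK Hc Hg.
  apply (dom_int g (K * D)); auto.
  intros x. apply Rle_trans with (1 := Hg x). rewrite Rmult_assoc. apply Rmult_le_compat_l; auto.
Qed.

Lemma ex_b f mu (G : Good f mu) b g : 0 < b -> (forall x, continuous g x) ->
  (forall x, Rabs (g x) <= (1 + Rabs (hlog f x)) ^ 3 * fpow f b x) -> ex_Int_R g.
Proof.
  intros Hb Hc Hg. destruct (dom_b f mu G b Hb) as [D [_ HD]].
  apply (HD g 1); auto; [lra|]. intros; rewrite Rmult_1_l; auto.
Qed.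

Lemma pow3_ge1 y : 1 <= (1 + Rabs y) ^ 3.
Proof.
  pose proof (Rabs_pos y). 
  assert (1 <= 1 + Rabs y) by lra.
  replace 1 with (1 ^ 3) at 1 by ring. apply pow_incr. lra.
Qed.

Lemma hpow_le y : Rabs y <= (1 + Rabs y) ^ 3 /\ y ^ 2 <= (1 + Rabs y) ^ 3 /\ 1 + Rabs y <= (1 + Rabs y) ^ 3.
Proof.
  pose proof (Rabs_pos y). replace (y ^ 2) with (Rabs y ^ 2) by (simpl; rewrite !Rmult_1_r, <- Rabs_mult, Rabs_pos_eq; auto; nra).
  set (a := Rabs y) in *. simpl. nra.
Qed.

Lemma pt_bound (u y b d h0 : R) : 0 < b -> Rabs d <= b / 2 -> y <= h0 -> Rabs u <= 1 + Rabs y ->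
  Rabs (u * exp ((b + d) * y) - u * exp (b * y) - d * (u * y * exp (b * y)))
  <= d ^ 2 * exp (b * Rabs h0) * ((1 + Rabs y) ^ 3 * exp (b / 2 * y)).
Proof.
  intros Hb Hd Hy Hu.
  replace (u * exp ((b + d) * y) - u * exp (b * y) - d * (u * y * exp (b * y)))
    with ((Rabs u * exp (b * y)) * (exp (d * y) - 1 - d * y) * (if Rle_dec 0 u then 1 else -1)).
  2: { replace ((b + d) * y) with (b * y + d * y) by ring. rewrite exp_plus.
       destruct (Rle_dec 0 u); [rewrite Rabs_pos_eq by lra | rewrite Rabs_left by lra]; ring. }
  rewrite Rabs_mult.
  replace (Rabs (if Rle_dec 0 u then 1 else -1)) with 1 by (destruct (Rle_dec 0 u); [rewrite Rabs_R1 | rewrite Rabs_left]; lra).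
  rewrite Rmult_1_r, Rabs_mult.
  rewrite (Rabs_pos_eq (Rabs u * exp (b * y))) by (apply Rmult_le_pos; [apply Rabs_pos | left; apply exp_pos]).
  pose proof (taylor2 (d * y)) as T.
  assert (E0 : exp (Rabs (d * y)) <= exp (b / 2 * Rabs y)).
  { apply exp_le'. rewrite Rabs_mult. apply Rmult_le_compat_r; auto. apply Rabs_pos. }
  assert (E1 : exp (b * y) * exp (b / 2 * Rabs y) <= exp (b * Rabs h0) * exp (b / 2 * y)).
  { rewrite <- !exp_plus. apply exp_le'.
    destruct (Rle_dec 0 y).
    - rewrite Rabs_pos_eq by lra. pose proof (Rle_abs h0). nra.
    - rewrite Rabs_left by lra. pose proof (Rabs_pos h0). nra. }
  assert (E2 : Rabs u * y ^ 2 <= (1 + Rabs y) ^ 3).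
  { replace (y ^ 2) with (Rabs y ^ 2) by (simpl; rewrite !Rmult_1_r, <- Rabs_mult, Rabs_pos_eq; auto; nra).
    pose proof (Rabs_pos y). pose proof (Rabs_pos u). simpl. nra. }
  assert (P1 : 0 <= Rabs u) by apply Rabs_pos.
  assert (P2 : 0 < exp (b * y)) by apply exp_pos.
  assert (P3 : 0 <= (d * y) ^ 2) by apply pow2_ge_0.
  assert (P4 : 0 < exp (Rabs (d * y))) by apply exp_pos.
  apply Rle_trans with (Rabs u * exp (b * y) * ((d * y) ^ 2 * exp (Rabs (d * y)))).
  { apply Rmult_le_compat_l; auto. apply Rmult_le_pos; lra. }
  apply Rle_trans with (Rabs u * exp (b * y) * ((d * y) ^ 2 * exp (b / 2 * Rabs y))).
  { apply Rmult_le_compat_l; [apply Rmult_le_pos; lra|]. apply Rmult_le_compat_l; auto. }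
  replace (Rabs u * exp (b * y) * ((d * y) ^ 2 * exp (b / 2 * Rabs y)))
    with (d ^ 2 * ((Rabs u * y ^ 2) * (exp (b * y) * exp (b / 2 * Rabs y)))) by ring.
  replace (d ^ 2 * exp (b * Rabs h0) * ((1 + Rabs y) ^ 3 * exp (b / 2 * y)))
    with (d ^ 2 * ((1 + Rabs y) ^ 3 * (exp (b * Rabs h0) * exp (b / 2 * y)))) by ring.
  apply Rmult_le_compat_l; [apply pow2_ge_0|].
  apply Rmult_le_compat; auto.
  - apply Rmult_le_pos; auto. apply pow2_ge_0.
  - apply Rmult_le_pos; left; apply exp_pos.
Qed.

Definition Pint (f u : R -> R) (b : R) := Int_R (fun x => u x * fpow f b x).

Lemma uh_bound (u y : R) : Rabs u <= 1 + Rabs y -> Rabs (u * y) <= (1 + Rabs y) ^ 3.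
Proof.
  intros H. rewrite Rabs_mult. pose proof (Rabs_pos y). pose proof (Rabs_pos u).
  simpl. nra.
Qed.

Lemma u_bound (u y : R) : Rabs u <= 1 + Rabs y -> Rabs u <= (1 + Rabs y) ^ 3.
Proof. intros H. pose proof (hpow_le y). lra. Qed.

Lemma ex_u f mu (G : Good f mu) u b : 0 < b -> (forall x, continuous u x) ->
  (forall x, Rabs (u x) <= 1 + Rabs (hlog f x)) ->
  ex_Int_R (fun x => u x * fpow f b x) /\ ex_Int_R (fun x => u x * hlog f x * fpow f b x).
Proof.
  intros Hb Hc Hu. split.
  - apply (ex_b f mu G b); auto.
    + intros x. apply cmult; auto. apply (fpow_cont f mu G).
    + intros x. rewrite Rabs_mult, (Rabs_pos_eq (fpow f b x)) by (left; apply fpow_pos).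
      apply Rmult_le_compat_r; [left; apply fpow_pos|]. apply u_bound; auto.
  - apply (ex_b f mu G b); auto.
    + intros x. apply cmult; [apply cmult; auto; apply (hlog_cont f mu G)|]. apply (fpow_cont f mu G).
    + intros x. rewrite Rabs_mult, (Rabs_pos_eq (fpow f b x)) by (left; apply fpow_pos).
      apply Rmult_le_compat_r; [left; apply fpow_pos|]. apply uh_bound; auto.
Qed.

Lemma Pint_deriv f mu (G : Good f mu) u b : 0 < b -> (forall x, continuous u x) ->
  (forall x, Rabs (u x) <= 1 + Rabs (hlog f x)) ->
  is_derive (Pint f u) b (Pint f (fun x => u x * hlog f x) b).
Proof.
  intros Hb Hc Hu.
  set (h0 := ln (f mu)). set (K0 := exp (b * Rabs h0)).
  assert (HK0 : 0 < K0) by apply exp_pos.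
  destruct (dom_b f mu G (b / 2) ltac:(lra)) as [D [D0 HD]].
  apply is_derive_Reals. intros eps Heps.
  assert (HPI : 0 < PI) by apply PI_RGT_0.
  assert (Hden : 0 < K0 * D * PI + 1) by (pose proof (Rmult_le_pos _ _ (Rmult_le_pos _ _ (Rlt_le _ _ HK0) D0) (Rlt_le _ _ HPI)); lra).
  set (d0 := Rmin (b / 2) (eps / (K0 * D * PI + 1))).
  assert (Hd0 : 0 < d0) by (unfold d0; apply Rmin_glb_lt; [lra | apply Rdiv_lt_0_compat; lra]).
  exists (mkposreal d0 Hd0). intros d Hdn Hd. simpl in Hd.
  assert (Hd1 : Rabs d <= b / 2) by (pose proof (Rmin_l (b/2) (eps / (K0 * D * PI + 1))); fold d0 in H; lra).
  assert (Hd2 : Rabs d < eps / (K0 * D * PI + 1)) by (pose proof (Rmin_r (b/2) (eps / (K0 * D * PI + 1))); fold d0 in H; lra).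
  assert (Hbd : 0 < b + d) by (apply Rabs_le_between in Hd1; lra).
  destruct (ex_u f mu G u (b + d) Hbd Hc Hu) as [E1 _].
  destruct (ex_u f mu G u b Hb Hc Hu) as [E2 E3].
  set (g1 := fun x => u x * fpow f (b + d) x) in *.
  set (g2 := fun x => u x * fpow f b x) in *.
  set (g3 := fun x => u x * hlog f x * fpow f b x) in *.
  destruct (Int_scal (-1) g2 E2) as [E2' I2].
  destruct (Int_scal (- d) g3 E3) as [E3' I3].
  destruct (Int_plus _ _ E2' E3') as [E23 I23].
  destruct (Int_plus _ _ E1 E23) as [_ I123].
  assert (Hpt : forall x, Rabs (g1 x + ((-1) * g2 x + (- d) * g3 x)) <= d ^ 2 * K0 * ((1 + Rabs (hlog f x)) ^ 3 * fpow f (b / 2) x)).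
  { intros x. unfold g1, g2, g3. rewrite !fpow_exp.
    replace (u x * exp ((b + d) * hlog f x) + (-1 * (u x * exp (b * hlog f x)) + - d * (u x * hlog f x * exp (b * hlog f x))))
      with (u x * exp ((b + d) * hlog f x) - u x * exp (b * hlog f x) - d * (u x * hlog f x * exp (b * hlog f x))) by ring.
    apply pt_bound; auto. apply ln_le'; [apply (g_pos f mu G) | apply (g_max f mu G)]. }
  assert (HK : 0 <= d ^ 2 * K0) by (apply Rmult_le_pos; [apply pow2_ge_0 | lra]).
  assert (HC : forall x, continuous (fun x => g1 x + ((-1) * g2 x + (- d) * g3 x)) x).
  { intros x. unfold g1, g2, g3. 
    assert (Hf : forall b', continuous (fpow f b') x) by (intros; apply (fpow_cont f mu G)).
    assert (Hh : continuous (hlog f) x) by apply (hlog_cont f mu G).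
    repeat first [apply cplus | apply cmult | apply cconst | apply Hf | apply Hh | apply Hc]. }
  destruct (HD (fun x => g1 x + ((-1) * g2 x + (- d) * g3 x)) (d ^ 2 * K0) HK HC Hpt) as [_ Hbnd].
  assert (EQ : Int_R (fun x => g1 x + ((-1) * g2 x + (- d) * g3 x)) = Int_R g1 + (-1 * Int_R g2 + - d * Int_R g3)).
  { rewrite <- I2, <- I3, <- I23. exact I123. }
  assert (Hbnd2 : Rabs (Int_R g1 + (-1 * Int_R g2 + - d * Int_R g3)) <= d ^ 2 * K0 * D * PI) by (rewrite <- EQ; exact Hbnd). clear Hbnd. rename Hbnd2 into Hbnd.
  unfold Pint. change (Rabs ((Int_R g1 - Int_R g2) / d - Int_R g3) < eps).
  assert (Hdn' : 0 < Rabs d) by (apply Rabs_pos_lt; auto).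
  replace ((Int_R g1 - Int_R g2) / d - Int_R g3) with ((Int_R g1 + (-1 * Int_R g2 + - d * Int_R g3)) / d) by (field; auto).
  unfold Rdiv. rewrite Rabs_mult, Rabs_inv.
  apply Rmult_lt_reg_r with (Rabs d); auto.
  rewrite Rmult_assoc, Rinv_l, Rmult_1_r by lra.
  apply Rle_lt_trans with (1 := Hbnd).
  replace (d ^ 2) with (Rabs d * Rabs d) by (rewrite <- Rabs_mult; simpl; rewrite Rmult_1_r; apply Rabs_pos_eq; nra).
  assert (Rabs d * (K0 * D * PI) < eps).
  { apply Rmult_lt_compat_r with (r := K0 * D * PI + 1) in Hd2; auto.
    replace (eps / (K0 * D * PI + 1) * (K0 * D * PI + 1)) with eps in Hd2 by (field; lra).
    assert (0 <= K0 * D * PI) by (apply Rmult_le_pos; [apply Rmult_le_pos|]; lra).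
    nra. }
  nra.
Qed.

Lemma fp_le_dom f mu (G : Good f mu) b : 0 < b -> exists D, 0 <= D /\ forall x, fpow f b x <= D * wf x.
Proof.
  intros Hb. destruct (g_dom f mu G b Hb) as [D HD].
  assert (Hx : forall x, fpow f b x <= D * wf x).
  { intros x. apply Rle_trans with (2 := HD x).
    pose proof (pow3_ge1 (hlog f x)). pose proof (fpow_pos f b x). nra. }
  exists D. split; auto.
  specialize (Hx 0). pose proof (fpow_pos f b 0). assert (0 < wf 0) by (apply Rinv_0_lt_compat, wf_pos). nra.
Qed.

Lemma Z_pos f mu (G : Good f mu) b : 0 < b -> 0 < Zb f b.
Proof.
  intros Hb. destruct (fp_le_dom f mu G b Hb) as [D [D0 HD]].
  destruct (nonneg_int (fpow f b) D) as [l [Hl [_ Hlow]]].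
  { intros; apply (fpow_cont f mu G). }
  { intros x; split; auto. left; apply fpow_pos. }
  unfold Zb. rewrite (Int_unique _ _ Hl).
  apply Rlt_le_trans with (RInt (fpow f b) (-1) 1); [| apply Hlow; lra].
  replace 0 with (RInt (fun _ => 0) (-1) 1).
  - apply RInt_lt; [lra | intros; apply (fpow_cont f mu G) | intros; apply cconst | intros; apply fpow_pos].
  - rewrite (RInt_const (V:=R_CompleteNormedModule)). apply (scal_zero_r (K:=R_AbsRing) (V:=R_NormedModule)).
Qed.

Lemma tail_small (C mu eps x : R) : 0 <= C -> 0 < eps -> 1 + C * (1 + Rabs mu) / eps < Rabs x ->
  Rabs (x - mu) * (C * wf x) < eps.
Proof.
  intros HC He Hx. set (a := Rabs x) in *. set (K := C * (1 + Rabs mu)) in *.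
  assert (HK : 0 <= K) by (unfold K; pose proof (Rabs_pos mu); nra).
  assert (HKe : 0 <= K / eps) by (apply Rmult_le_pos; [lra | left; apply Rinv_0_lt_compat; lra]).
  assert (Ha1 : 1 < a) by lra.
  assert (Hx2 : x ^ 2 = a ^ 2) by (unfold a; rewrite pow2_abs; auto).
  unfold wf. rewrite Hx2.
  assert (Htri : Rabs (x - mu) <= a + Rabs mu).
  { unfold Rminus. pose proof (Rabs_triang x (- mu)). rewrite Rabs_Ropp in H. unfold a. lra. }
  assert (Hea : K < eps * a).
  { assert (eps * (K / eps) = K) by (field; lra). nra. }
  assert (Hp : 0 < 1 + a ^ 2) by (pose proof (pow2_ge_0 a); lra).
  replace (Rabs (x - mu) * (C * / (1 + a ^ 2))) with (Rabs (x - mu) * C / (1 + a ^ 2)) by (field; lra).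
  apply Rlt_div_l; auto.
  assert (Rabs (x - mu) * C <= K * a).
  { unfold K. pose proof (Rabs_pos mu). pose proof (Rabs_pos (x - mu)).
    assert (Rabs (x - mu) * C <= (a + Rabs mu) * C) by (apply Rmult_le_compat_r; auto).
    assert (0 <= C * Rabs mu * (a - 1)) by (apply Rmult_le_pos; [apply Rmult_le_pos|]; lra).
    lra. }
  assert (K * a < eps * a * a) by (apply Rmult_lt_compat_r; lra).
  assert (eps * a * a <= eps * (1 + a ^ 2)) by (simpl; nra).
  lra.
Qed.

Lemma lim_tails (C mu : R) (v : R -> R) : 0 <= C -> (forall x, Rabs (v x) <= Rabs (x - mu) * (C * wf x)) ->
  filterlim v (Rbar_locally p_infty) (locally 0) /\ filterlim v (Rbar_locally m_infty) (locally 0).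
Proof.
  intros HC Hv. split.
  - intros P [eps HP]. exists (1 + C * (1 + Rabs mu) / eps). intros x Hx. apply HP.
    change (Rabs (v x - 0) < eps). rewrite Rminus_0_r.
    apply Rle_lt_trans with (1 := Hv x). apply tail_small; auto; [apply cond_pos|].
    assert (0 <= C * (1 + Rabs mu) / eps).
    { apply Rmult_le_pos; [apply Rmult_le_pos; [lra | pose proof (Rabs_pos mu); lra] | left; apply Rinv_0_lt_compat, cond_pos]. }
    rewrite (Rabs_pos_eq x); lra.
  - intros P [eps HP]. exists (- (1 + C * (1 + Rabs mu) / eps)). intros x Hx. apply HP.
    change (Rabs (v x - 0) < eps). rewrite Rminus_0_r.
    apply Rle_lt_trans with (1 := Hv x). apply tail_small; auto; [apply cond_pos|].
    assert (0 <= C * (1 + Rabs mu) / eps).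
    { apply Rmult_le_pos; [apply Rmult_le_pos; [lra | pose proof (Rabs_pos mu); lra] | left; apply Rinv_0_lt_compat, cond_pos]. }
    rewrite (Rabs_left x); lra.
Qed.

Lemma S_val f mu (G : Good f mu) b : 0 < b ->
  ex_Int_R (fun x => kfun f mu x * fpow f b x) /\
  Int_R (fun x => kfun f mu x * fpow f b x) = - Zb f b / b.
Proof.
  intros Hb.
  set (u := fun x => (x - mu) * fpow f b x).
  set (du := fun x => fpow f b x + (x - mu) * (b * hd f x * fpow f b x)).
  assert (Hu : forall x, is_derive u x (du x)).
  { intros x. unfold u, du, fpow, Rpower, hd. pose proof (g_pos f mu G x). pose proof (g_d f mu G x).
    auto_derive; auto. rewrite Rmult_1_l. change (Derive (fun x0 => f x0) x) with (Derive f x). field. lra. }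
  assert (HDu : Derive u = du) by (apply functional_extensionality; intros x; apply is_derive_unique, Hu).
  assert (Hdu_c : forall x, continuous du x).
  { intros x. unfold du.
    assert (Hf : continuous (fpow f b) x) by apply (fpow_cont f mu G).
    assert (Hh : continuous (hd f) x) by apply (hd_cont f mu G).
    repeat first [apply Hf | apply Hh | apply cplus | apply cmult | apply cminus | apply cconst | apply cid]. }
  destruct (fp_le_dom f mu G b Hb) as [D [D0 HD]].
  destruct (lim_tails D mu u D0) as [Lp Lm].
  { intros x. unfold u. rewrite Rabs_mult, (Rabs_pos_eq (fpow f b x)) by (left; apply fpow_pos).
    apply Rmult_le_compat_l; auto. apply Rabs_pos. }
  assert (HI : is_RInt_gen (Derive u) (Rbar_locally m_infty) (Rbar_locally p_infty) (0 - 0)).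
  { apply is_RInt_gen_Derive; auto.
    - apply (Filter_prod _ _ _ (fun a => True) (fun b => True)); [exists 0; auto | exists 0; auto |].
      intros; eexists; apply Hu.
    - apply (Filter_prod _ _ _ (fun a => True) (fun b => True)); [exists 0; auto | exists 0; auto |].
      intros. rewrite HDu. apply Hdu_c. }
  rewrite HDu in HI.
  assert (Ef : ex_Int_R (fpow f b)).
  { apply (ex_b f mu G b); auto. intros; apply (fpow_cont f mu G).
    intros x. rewrite Rabs_pos_eq by (left; apply fpow_pos). pose proof (pow3_ge1 (hlog f x)).
    pose proof (fpow_pos f b x). nra. }
  pose proof (is_RInt_gen_minus _ _ _ _ HI (Int_correct _ Ef)) as H2.
  pose proof (is_RInt_gen_scal _ (/ b) _ H2) as H3.
  assert (Efun : (fun y => scal (/ b) (minus (du y) (fpow f b y))) = (fun x => kfun f mu x * fpow f b x)).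
  { apply functional_extensionality. intros x. unfold kfun, du. rewrite (Derive_hlog f mu G).
    change (/ b * (fpow f b x + (x - mu) * (b * hd f x * fpow f b x) - fpow f b x) = (x - mu) * hd f x * fpow f b x).
    field. lra. }
  assert (H4 : is_RInt_gen (fun x => kfun f mu x * fpow f b x) (Rbar_locally m_infty) (Rbar_locally p_infty)
     (scal (/ b) (minus (0 - 0) (Int_R (fpow f b))))) by (rewrite <- Efun; exact H3).
  clear H3; rename H4 into H3.
  split; [eexists; exact H3|].
  rewrite (Int_unique _ _ H3). unfold Zb. change (/ b * (0 - 0 - Int_R (fpow f b)) = - Int_R (fpow f b) / b).
  field. lra.
Qed.

Theorem proposition3 (f : R -> R) (mu alpha Mb : R) :
  (forall x, 0 < f x) ->
  C4 f ->
  unimodal_at f mu ->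
  0 < alpha -> regularly_varying (Hpot f) alpha ->
  0 < Mb -> (forall x, Rabs (Derive_n (hlog f) 4 x) < Mb) ->
  forall beta, 0 < beta ->
    ex_Int_R (fpow f beta) /\
    ex_Int_R (fun x => hlog f x * fpow f beta x) /\
    ex_Int_R (fun x => kfun f mu x * fpow f beta x) /\
    is_derive (Mfun f) beta (Varb f beta (hlog f)) /\
    Sfun f mu beta = - / beta /\
    is_derive (Sfun f mu) beta (/ beta ^ 2).
Proof.
  intros fpos HC4 Hu Ha Hrv _ _ beta Hb.
  assert (G : Good f mu).
  { destruct HC4 as [Hn _]. constructor.
    - exact fpos.
    - intros x. exact (Hn 1%nat x ltac:(lia)).
    - intros x. exact (Hn 2%nat x ltac:(lia)).
    - apply fmax; auto.
    - apply (dom3_from f mu); [exact fpos | apply fmax; auto |].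
      apply (tail_bound f mu alpha); auto. }
  assert (Hh1 : forall x, Rabs (hlog f x) <= 1 + Rabs (hlog f x)) by (intros; lra).
  assert (H11 : forall x, Rabs ((fun _ => 1) x) <= 1 + Rabs (hlog f x)) by (intros; rewrite Rabs_R1; pose proof (Rabs_pos (hlog f x)); lra).
  assert (Hhc : forall x, continuous (hlog f) x) by apply (hlog_cont f mu G).
  assert (H1c : forall x, continuous (fun _ : R => 1) x) by (intros; apply cconst).
  assert (Efp : forall b, fpow f b = (fun x => (fun _ => 1) x * fpow f b x)).
  { intros b. apply functional_extensionality. intros x. ring. }
  destruct (ex_u f mu G (hlog f) beta Hb Hhc Hh1) as [Eh Ehh].
  destruct (ex_u f mu G (fun _ => 1) beta Hb H1c H11) as [E1 E1h].
  rewrite <- Efp in E1.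
  destruct (S_val f mu G beta Hb) as [Ek Sk].
  assert (HZ : 0 < Zb f beta) by apply (Z_pos f mu G beta Hb).
  assert (SV : forall b, 0 < b -> Sfun f mu b = - / b).
  { intros b Hb'. unfold Sfun, Eb. destruct (S_val f mu G b Hb') as [_ S'].
    rewrite S'. pose proof (Z_pos f mu G b Hb'). field. split; lra. }
  split; [exact E1|]. split; [exact Eh|]. split; [exact Ek|].
  split; [|split; [apply SV; auto|]].
  - assert (EM : Mfun f = fun b => Pint f (hlog f) b / Pint f (fun _ => 1) b).
    { apply functional_extensionality. intros b. unfold Mfun, Eb, Pint, Zb. rewrite <- Efp. reflexivity. }
    rewrite EM.
    assert (HZ' : Pint f (fun _ => 1) beta = Zb f beta) by (unfold Pint, Zb; rewrite <- Efp; reflexivity).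
    eapply is_derive_ext; [intros; reflexivity|].
    replace (Varb f beta (hlog f)) with
      ((Pint f (fun x => hlog f x * hlog f x) beta * Pint f (fun _ => 1) beta - Pint f (hlog f) beta * Pint f (fun x => 1 * hlog f x) beta) / (Pint f (fun _ => 1) beta) ^ 2).
    + apply is_derive_div.
      * apply (Pint_deriv f mu G); auto.
      * apply (Pint_deriv f mu G); auto.
      * rewrite HZ'. lra.
    + rewrite HZ'.
      set (Z := Zb f beta) in *.
      set (A := Pint f (hlog f) beta).
      assert (EA : Pint f (fun x => 1 * hlog f x) beta = A).
      { unfold A, Pint. f_equal. apply functional_extensionality. intros x. ring. }
      rewrite EA.
      unfold Varb. unfold Eb at 1.
      assert (Em : Eb f beta (hlog f) = A / Z) by reflexivity.
      rewrite Em. set (m := A / Z).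
      set (Q := Pint f (fun x => hlog f x * hlog f x) beta).
      assert (EQ2 : (fun x => (hlog f x - m) ^ 2 * fpow f beta x) =
                    (fun x => (fun x => hlog f x * hlog f x * fpow f beta x) x +
                              ((fun x => (- 2 * m) * (hlog f x * fpow f beta x)) x +
                               (fun x => m ^ 2 * fpow f beta x) x))).
      { apply functional_extensionality. intros x. ring. }
      assert (Eq : ex_Int_R (fun x => hlog f x * hlog f x * fpow f beta x)) by exact Ehh.
      destruct (Int_scal (- 2 * m) _ Eh) as [Eh' Ih'].
      destruct (Int_scal (m ^ 2) _ E1) as [E1' I1'].
      destruct (Int_plus _ _ Eh' E1') as [E2' I2'].
      destruct (Int_plus _ _ Eq E2') as [_ I3'].
      rewrite EQ2, I3', I2', Ih', I1'.
      fold Q. change (Int_R (fun x => hlog f x * fpow f beta x)) with A.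
      change (Int_R (fpow f beta)) with Z. unfold m. change (Int_R (fun x : R => hlog f x * hlog f x * fpow f beta x)) with Q. change (Zb f beta) with Z. field. lra.
  - apply (is_derive_ext_loc (fun b => - / b)).
    + exists (mkposreal (beta / 2) ltac:(lra)). intros y Hy.
      change (Rabs (y - beta) < beta / 2) in Hy. apply Rabs_def2 in Hy.
      symmetry. apply SV. lra.
    + auto_derive; [lra|]. field. lra.
Qed.
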